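(* Let $X$ be a Banach space, $\mathfrak{L}$ a metric space of functions on $\mathbb{R}$, and $g\in\mathfrak{L}$ translation compact, with hull $\mathcal{H}(g)$, such that the translations $T(h)$ belong to $\mathcal{C}(\mathcal{H}(g),\mathcal{H}(g))$ for all $h\in\mathbb{R}$. Suppose that for every $f\in\mathcal{H}(g)$ the equation $\frac{d}{dt}u(t)=\mathcal{A}(u(t))+f(t)$ (with $\mathcal{A}$ a densely defined operator on $X$) is well posed for every initial datum $u_0\in X$ at every initial time $\tau\in\mathbb{R}$, generating a process $U_f(t,\tau)$ on $X$ (so $U_f(t,\tau)u_0=u(t)$, the solution with $u(\tau)=u_0$), and that $U_f(h+t,h+\tau)=U_{T(h)f}(t,\tau)$ for all $f\in\mathcal{H}(g)$, $h\in\mathbb{R}$, $t\ge\tau$. If the family $\{U_f(t,\tau)\}_{f\in\mathcal{H}(g)}$ is uniformly totally dissipative and asymptotically closed, then its uniform global attractor satisfies $$A_{\mathcal{H}(g)}=\bigcup_{f\in\mathcal{H}(g)}\{u(0): u \text{ is a complete bounded trajectory of } U_f(t,\tau)\}.$$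
   Context: A process on $X$ is a family of maps $U(t,\tau):X\to X$, $t\ge\tau$, with $U(\tau,\tau)=\mathrm{id}_X$ and $U(t,\tau)=U(t,s)U(s,\tau)$ for $t\ge s\ge\tau$. $g$ is translation compact in $\mathfrak{L}$ if $\{g(\cdot+h):h\in\mathbb{R}\}$ is precompact in $\mathfrak{L}$; its closure in $\mathfrak{L}$ is the hull $\mathcal{H}(g)$ (a compact metric space). $[T(h)f](t)=f(h+t)$. The symbol space of the family is $\Sigma=\mathcal{H}(g)$. For nonempty $B,C\subset X$, $\delta_X(B,C)=\sup_{x\in B}\inf_{\xi\in C}\|x-\xi\|$. A set $K\subset X$ is uniformly attracting if for every bounded $C\subset X$, $\lim_{t-\tau\to\infty}\sup_{f\in\mathcal{H}(g)}\delta_X(U_f(t,\tau)C,K)=0$; the uniform global attractor $A_{\mathcal{H}(g)}$ is the compact uniformly attracting set contained in every compact uniformly attracting set. The family is uniformly totally dissipative if for every $\varepsilon>0$ there is a finite set $M_\varepsilon\subset X$ whose open $\varepsilon$-neighborhood $\mathcal{U}_\varepsilon(M_\varepsilon)$ is uniformly absorbing, i.e. for each bounded $C$ there is $t_e$ with $U_f(t,\tau)C\subset\mathcal{U}_\varepsilon(M_\varepsilon)$ for all $f$ whenever $t-\tau\ge t_e$. The family is asymptotically closed if there is a (finite with at least two terms, or infinite) sequence $0=h_0<h_1<h_2<\cdots$ such that whenever $f_n\to f$ in $\mathcal{H}(g)$ and $U_{f_n}(h_k,0)x_n\to\xi^k\in X$ as $n\to\infty$ for every $k$, then $U_f(h_k,0)\xi^0=\xi^k$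 for every $k$. A complete bounded trajectory of $U_f(t,\tau)$ is a function $u:\mathbb{R}\to X$ with bounded range and $u(s)=U_f(s,\tau)u(\tau)$ for all $s\ge\tau$, $\tau\in\mathbb{R}$. *)

(* Defs.v *)
From HB Require Import structures.
From mathcomp Require Import all_boot all_order all_algebra.
From mathcomp Require Import all_classical all_reals all_analysis.
Set Implicit Arguments. Unset Strict Implicit. Unset Printing Implicit Defensive.
Import Order.TTheory GRing.Theory Num.Theory.
Import numFieldNormedType.Exports.
Local Open Scope classical_set_scope.
Local Open Scope ring_scope.

Section Defs.
Variables (R : realType) (X : normedModType R) (L : Type).

(* The family of maps U f t tau : X -> X, indexed by symbols f : L. *)
Definition process_family := L -> R -> R -> X -> X.

Definition is_process (U : R -> R -> X -> X) : Prop :=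
  (forall tau, U tau tau = id) /\
  (forall t s tau, tau <= s -> s <= t -> U t tau = U t s \o U s tau).

Definition hdist (B C : set X) : \bar R :=
  ereal_sup [set ereal_inf [set (`|x - xi|)%:E | xi in C] | x in B].

Definition unif_attracting (Sigma : set L) (U : process_family) (K : set X) : Prop :=
  forall C : set X, bounded_set C ->
  forall eps : R, 0 < eps -> exists T0 : R, forall t tau : R, T0 <= t - tau ->
    (ereal_sup [set hdist (U f t tau @` C) K | f in Sigma] <= eps%:E)%E.

Definition is_uniform_global_attractor (Sigma : set L) (U : process_family) (A : set X)
  : Prop :=
  compact A /\ unif_attracting Sigma U A /\
  (forall K : set X, compact K -> unif_attracting Sigma U K -> A `<=` K).

Definition eps_nbhd (eps : R) (M : set X) : set X :=
  [set y | exists2 m, M m & `|y - m| < eps].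

Definition unif_absorbing (Sigma : set L) (U : process_family) (B : set X) : Prop :=
  forall C : set X, bounded_set C -> exists te : R,
    forall f, Sigma f -> forall t tau : R, te <= t - tau -> U f t tau @` C `<=` B.

Definition unif_totally_dissipative (Sigma : set L) (U : process_family) : Prop :=
  forall eps : R, 0 < eps -> exists M : set X,
    finite_set M /\ unif_absorbing Sigma U (eps_nbhd eps M).

(* index set of the sequence h_0 < h_1 < ... : {0..N-1} if finite (N >= 2),
   all of nat if infinite *)
Definition seq_index (n : option nat) (k : nat) : Prop :=
  match n with Some N => (k < N)%N | None => True end.

End Defs.

Definition asymptotically_closed (R : realType) (X : normedModType R)
  (L : topologicalType) (Sigma : set L) (U : process_family X L) : Prop :=
  exists (n : option nat) (h : nat -> R),
    (match n with Some N => (2 <= N)%N | None => True end) /\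
    h 0%N = 0 /\
    (forall k, seq_index n k.+1 -> h k < h k.+1) /\
    (forall (fn : nat -> L) (f : L) (xn : nat -> X) (xi : nat -> X),
       (forall m, Sigma (fn m)) -> Sigma f ->
       fn @ \oo --> f ->
       (forall k, seq_index n k -> (fun m => U (fn m) (h k) 0 (xn m)) @ \oo --> xi k) ->
       forall k, seq_index n k -> U f (h k) 0 (xi 0%N) = xi k).

Definition complete_bounded_trajectory (R : realType) (X : normedModType R)
  (V : R -> R -> X -> X) (u : R -> X) : Prop :=
  bounded_set (range u) /\ (forall s tau : R, tau <= s -> u s = V s tau (u tau)).

(* Main.v *)
Require Import Defs.
From HB Require Import structures.
From mathcomp Require Import all_boot all_order all_algebra.
From mathcomp Require Import all_classical all_reals all_analysis.
From mathcomp Require Import ring lra.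
Import Order.TTheory GRing.Theory Num.Theory.
Import numFieldNormedType.Exports.
Local Open Scope classical_set_scope.
Local Open Scope ring_scope.

Section Generic.
Local Set Implicit Arguments. Local Unset Strict Implicit.

Lemma F_bound (I : Type) (F : set_system I) {FF : Filter F} (P : nat -> set I) :
  (forall k, F (P k)) -> forall n, F [set m | forall k, (k <= n)%N -> P k m].
Proof.
move=> FP; elim=> [|n IH].
  by apply: filterS (FP 0%N) => m Pm k; rewrite leqn0 => /eqP ->.
apply: filterS (filterI IH (FP n.+1)) => m [H1 H2] k.
rewrite leq_eqVlt => /orP[/eqP -> //|]; rewrite ltnS; exact: H1.
Qed.

Lemma extract (F : set_system nat) {FF : ProperFilter F} (E : nat -> set nat) :
  (forall i, F (E i)) -> exists phi : nat -> nat, forall n i, (i <= n)%N -> E i (phi n).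
Proof.
move=> FE.
have H n : exists x, forall k, (k <= n)%N -> E k x.
  exact: (filter_ex (F_bound FE n)).
exists (fun n => projT1 (cid (H n))) => n i lein.
exact: (projT2 (cid (H n)) i lein).
Qed.

Lemma ultra_seq (I : Type) (F : set_system I) {FF : ProperFilter F}
  (ult : forall A, F A \/ F (~` A)) (Y : eqType) (P : Y -> set I) (s : seq Y) :
  F [set m | exists2 p, p \in s & P p m] -> exists2 p, p \in s & F (P p).
Proof.
elim: s => [|a s IH] Fs.
  by exfalso; apply: (filter_not_empty F); apply: filterS Fs => m [p].
case: (ult (P a)) => [Pa|nPa]; first by exists a => //; rewrite inE eqxx.
have [p ps Pp] : exists2 p, p \in s & F (P p).
  apply: IH; apply: filterS (filterI Fs nPa) => m [[p]].
  rewrite inE => /orP[/eqP -> //|ps Pp _]; by exists p.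
by exists p => //; rewrite inE ps orbT.
Qed.

Lemma ultra_cauchy (R : realType) (X : completeNormedModType R)
  (G : set_system X) {GF : ProperFilter G} (ult : forall A, G A \/ G (~` A)) :
  (forall eps, 0 < eps -> exists s : seq X,
      G [set y | exists2 p, p \in s & `|y - p| < eps]) ->
  exists z : X, G --> z.
Proof.
move=> Hc; suff : [cvg G in X] by move=> /cvg_ex.
apply: cauchy_cvg; apply: cauchy_exP => eps eps0.
have [s Gs] := Hc eps eps0.
have [p _ Gp] := ultra_seq ult (P := fun p y => `|y - p| < eps) Gs.
exists p; apply: filterS Gp => y; by rewrite -ball_normE /= distrC.
Qed.

Lemma nat_gt (R : realType) (x : R) : exists n : nat, x < n%:R.
Proof. by exists (Num.Def.trunc x).+1; exact: truncnS_gt. Qed.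

Lemma inv_small (R : realType) (eps : R) : 0 < eps -> exists i : nat, (i.+1%:R)^-1 < eps.
Proof.
move=> e0; have [n hn] := nat_gt (eps^-1); exists n.
rewrite -(invrK eps) ltf_pV2 ?posrE ?invr_gt0 ?ltr0n //.
by apply: lt_trans hn _; rewrite ltr_nat.
Qed.

Lemma inv_mono (R : realType) (i j : nat) : (i <= j)%N -> (j.+1%:R)^-1 <= (i.+1%:R)^-1 :> R.
Proof. by move=> ij; rewrite lef_pV2 ?posrE ?ltr0n // ler_nat ltnS. Qed.

Lemma inv_pos (R : realType) (i : nat) : 0 < (i.+1%:R)^-1 :> R.
Proof. by rewrite invr_gt0 ltr0n. Qed.

Lemma seq_bound (R : realType) (X : normedModType R) (s : seq X) :
  exists rho : R, forall m, m \in s -> `|m| <= rho.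
Proof.
elim: s => [|a s [r IH]]; first by exists 0.
exists (`|a| + `|r|) => m; rewrite inE => /orP[/eqP ->|ms].
  by rewrite lerDl.
apply: le_trans (IH _ ms) _; apply: le_trans (ler_norm r) _; by rewrite lerDr.
Qed.

End Generic.

Lemma bounded_of (R : realType) (X : normedModType R) (A : set X) (rho : R) :
  (forall x, A x -> `|x| <= rho) -> bounded_set A.
Proof.
move=> H; exists rho; split; first by rewrite num_real.
move=> M hM x Ax; exact: le_trans (H x Ax) (ltW hM).
Qed.

Section Main.
Variables (R : realType) (X : completeNormedModType R) (L : metricType R)
  (T : R -> L -> L) (g : L) (U : L -> R -> R -> X -> X).
Local Notation Sig := (closure (range (fun h => T h g))).
Hypotheses (g_tc : compact Sig)
 (hT_maps : forall h, T h @` Sig `<=` Sig)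
 (hT_cont : forall h, {within Sig, continuous (T h)})
 (hU : forall f, Sig f -> is_process (U f))
 (hU_transl : forall f, Sig f -> forall h t tau, tau <= t ->
     U f (h + t) (h + tau) = U (T h f) t tau)
 (hdiss : unif_totally_dissipative Sig U)
 (hclosed : asymptotically_closed Sig U).

Local Notation Kset := [set x | exists2 f, Sig f &
   exists2 u, complete_bounded_trajectory (U f) u & x = u 0].

Lemma L1 eps : 0 < eps -> exists s : seq X, forall C, bounded_set C ->
  exists te, forall f, Sig f -> forall t tau, te <= t - tau -> forall x, C x ->
  exists2 p, p \in s & `|U f t tau x - p| < eps.
Proof.
move=> e0; have [M [fM abs]] := hdiss eps e0.
have [s Ms] := (finite_seqP M).1 fM; exists s => C BC.
have [te Hte] := abs C BC; exists te => f Sf t tau hte x Cx.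
have := Hte f Sf t tau hte (U f t tau x) (ex_intro2 _ _ x Cx erefl).
by rewrite Ms => -[p ps hp]; exists p.
Qed.

Lemma L3 : exists rho : R, forall C, bounded_set C ->
  exists te, forall f, Sig f -> forall t tau, te <= t - tau -> forall x, C x ->
  `|U f t tau x| < rho.
Proof.
have [s Hs] := L1 1 ltr01; have [r Hr] := seq_bound s.
exists (r + 1) => C BC; have [te Hte] := Hs C BC.
exists te => f Sf t tau hte x Cx; have [p ps hp] := Hte f Sf t tau hte x Cx.
have := Hr p ps; have := ler_normD (U f t tau x - p) p; rewrite subrK.
lra.
Qed.

Section Inner.
Variable rho : R.
Hypothesis Hrho : forall C, bounded_set C ->
  exists te, forall f, Sig f -> forall t tau, te <= t - tau -> forall x, C x ->
  `|U f t tau x| < rho.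
Variable F : set_system nat.
Context {FF : ProperFilter F}.
Hypothesis Fult : forall A, F A \/ F (~` A).
Hypothesis Finf : forall N, F [set m | (N <= m)%N].
Variables (n0 : option nat) (h : nat -> R).
Hypotheses (hN : match n0 return Prop with Some N => is_true (2 <= N)%N | None => True end)
  (h0 : h 0%N = 0)
  (hinc : forall k, seq_index n0 k.+1 -> h k < h k.+1)
  (hcl : forall (fn : nat -> L) (f : L) (xn : nat -> X) (xi : nat -> X),
       (forall m, Sig (fn m)) -> Sig f ->
       fn @ \oo --> f ->
       (forall k, seq_index n0 k -> (fun m => U (fn m) (h k) 0 (xn m)) @ \oo --> xi k) ->
       forall k, seq_index n0 k -> U f (h k) 0 (xi 0%N) = xi k).
Variables (C : set X) (BC : bounded_set C) (gs : nat -> L) (Sgs : forall m, Sig (gs m))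
  (s : nat -> R) (hs : forall m, m%:R <= s m) (xs : nat -> X) (Cxs : forall m, C (xs m)).

Definition q t m := U (gs m) t (- s m) (xs m).

Lemma Fge (N : nat) (P : set nat) : (forall m, (N <= m)%N -> P m) -> F P.
Proof. by move=> H; apply: filterS (Finf N). Qed.

Lemma Fge_s (N : nat) : F [set m | N%:R <= s m].
Proof. by apply: (Fge N) => m hm; apply: le_trans (hs m); rewrite ler_nat. Qed.

Lemma q_cvg t : exists z : X, q t @ F --> z.
Proof.
apply: ultra_cauchy; first by move=> A; exact: (Fult (q t @^-1` A)).
move=> eps e0; have [s' Hs'] := L1 eps e0; have [te Hte] := Hs' C BC.
have [N hN'] := nat_gt (te - t); exists s'.
suff : F [set m | exists2 p, p \in s' & `|q t m - p| < eps] by [].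
apply: filterS (Fge_s N) => m /= hm; rewrite /q.
have ht : te <= t - - s m by lra.
exact: (Hte _ (Sgs m) t (- s m) ht _ (Cxs m)).
Qed.

Definition w t := projT1 (cid (q_cvg t)).
Lemma w_cvg t : q t @ F --> w t.
Proof. exact: (projT2 (cid (q_cvg t))). Qed.

Lemma gs_lim : exists f, Sig f /\ gs @ F --> f.
Proof.
have [f [Sf clf]] := g_tc (gs @ F) _ (filterS (fun m _ => Sgs m) filterT).
exists f; split => // B nB.
case: (Fult (gs @^-1` B)) => // nB'.
by have [y [ny By]] := clf (~` B) _ nB' nB.
Qed.

Definition flim := projT1 (cid gs_lim).
Lemma Sflim : Sig flim. Proof. exact: (projT2 (cid gs_lim)).1. Qed.
Lemma gs_cvg : gs @ F --> flim. Proof. exact: (projT2 (cid gs_lim)).2. Qed.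

Lemma T_cvg t0 : (fun m => T t0 (gs m)) @ F --> T t0 flim.
Proof.
have := (@subspace_continuousP _ Sig _ (T t0)).1 (hT_cont t0) flim Sflim.
move=> H; apply: (cvg_trans _ H).
have : gs @ F --> within Sig (nbhs flim).
  move=> B /= wB; have H1 : F [set m | Sig (gs m) -> B (gs m)] := gs_cvg _ wB.
  change (F [set m | B (gs m)]); apply: filterS H1 => m; exact: (fun Hm => Hm (Sgs m)).
exact: cvg_fmap2.
Qed.


Lemma idx1 : seq_index n0 1.
Proof. by move: hN; case: n0. Qed.

Lemma idx_down k : seq_index n0 k.+1 -> seq_index n0 k.
Proof. by case: n0 => //= N; apply: ltnW. Qed.

Lemma h_nonneg k : seq_index n0 k -> 0 <= h k.
Proof.
elim: k => [|k IH] hk; first by rewrite h0.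
apply: le_trans (IH (idx_down k hk)) (ltW (hinc k hk)).
Qed.

Lemma a_pos : 0 < h 1%N.
Proof. by have := hinc 0%N idx1; rewrite h0. Qed.

Lemma CL t0 : U (T t0 flim) (h 1%N) 0 (w t0) = w (t0 + h 1%N).
Proof.
pose E i := [set m | ball (T t0 flim) (i.+1%:R^-1) (T t0 (gs m)) /\
  (forall k, (k <= i)%N -> `|w (t0 + h k) - q (t0 + h k) m| < i.+1%:R^-1) /\
  - s m <= t0].
have FE i : F (E i).
  apply: filterI; first exact: (cvg_ball (T_cvg t0) (inv_pos R i)).
  apply: filterI.
    apply: (@F_bound _ F _ (fun k m => `|w (t0 + h k) - q (t0 + h k) m| < i.+1%:R^-1)) => k.
    exact: ((cvgrPdist_lt _ _).1 (w_cvg (t0 + h k)) _ (inv_pos R i)).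
  have [N hN'] := nat_gt (- t0); apply: filterS (Fge_s N) => m /= hm; lra.
have [phi Hphi] := extract FE.
have Hfn : forall m, Sig (T t0 (gs (phi m))).
  by move=> m; apply: hT_maps; exists (gs (phi m)) => //; exact: Sgs.
have Hf : Sig (T t0 flim).
  by apply: hT_maps; exists flim => //; exact: Sflim.
have Hc1 : (fun m => T t0 (gs (phi m))) @ \oo --> T t0 flim.
  apply/cvg_ballP => eps e0; have [i hi] := inv_small e0.
  exists i => // n /= hin; have [H1 _] := Hphi n i hin.
  exact: (le_ball (ltW hi)).
have Hc2 : forall k, seq_index n0 k ->
    (fun m => U (T t0 (gs (phi m))) (h k) 0 (q t0 (phi m))) @ \oo --> w (t0 + h k).
  move=> k hk; apply/cvgrPdist_lt => eps e0; have [i hi] := inv_small e0.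
  exists (i + k)%N => // n /= hn; have [_ [H2 H3]] := Hphi n (i + k)%N hn.
  have -> : U (T t0 (gs (phi n))) (h k) 0 (q t0 (phi n)) = q (t0 + h k) (phi n).
    rewrite -(hU_transl _ (Sgs (phi n)) t0 (h k) 0 (h_nonneg k hk)).
    rewrite addr0 /q ((hU _ (Sgs (phi n))).2 (t0 + h k) t0 (- s (phi n))) //.
    by rewrite lerDl (h_nonneg k hk).
  apply: lt_le_trans (H2 k (leq_addl i k)) _.
  exact: le_trans (inv_mono R (leq_addr k i)) (ltW hi).
have := hcl _ _ _ (fun k => w (t0 + h k)) Hfn Hf Hc1 Hc2 1%N idx1.
by rewrite h0 addr0.
Qed.

Definition P (j : nat) : R := - (j%:R * h 1%N).

Lemma P_anti i j : (i <= j)%N -> P j <= P i.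
Proof.
by move=> ij; rewrite /P lerN2 ler_wpM2r ?ler_nat // ltW // a_pos.
Qed.

Lemma Sfl : Sig flim. Proof. exact: Sflim. Qed.

Lemma step j : U flim (P j) (P j.+1) (w (P j.+1)) = w (P j).
Proof.
have := CL (P j.+1).
rewrite -(hU_transl _ Sfl (P j.+1) (h 1%N) 0 (ltW a_pos)) addr0.
have -> : P j.+1 + h 1%N = P j by rewrite /P; ring.
by [].
Qed.

Lemma consist j d t : P j <= t ->
  U flim t (P (j + d)) (w (P (j + d))) = U flim t (P j) (w (P j)).
Proof.
move=> hj; elim: d => [|d IH]; first by rewrite addn0.
rewrite addnS ((hU _ Sfl).2 t (P (j + d)) (P (j + d).+1)) /=.
- by rewrite step IH.
- exact: P_anti.
- exact: le_trans (P_anti _ _ (leq_addr d j)) hj.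
Qed.

Lemma ex_j t : exists j, P j <= t.
Proof.
have [j hj] := nat_gt (- t / h 1%N); exists j; rewrite /P.
have := hj; rewrite ltr_pdivrMr ?a_pos // => hj'; lra.
Qed.

Definition jt t := projT1 (cid (ex_j t)).
Lemma jtP t : P (jt t) <= t. Proof. exact: (projT2 (cid (ex_j t))). Qed.

Definition u t := U flim t (P (jt t)) (w (P (jt t))).

Lemma u_eq t j : P j <= t -> u t = U flim t (P j) (w (P j)).
Proof.
move=> hj; rewrite /u.
have e1 := consist (jt t) (maxn j (jt t) - jt t) t (jtP t).
have e2 := consist j (maxn j (jt t) - j) t hj.
rewrite subnKC ?leq_maxr // in e1; rewrite subnKC ?leq_maxl // in e2.
by rewrite -e1 e2.
Qed.

Lemma u_traj s' tau : tau <= s' -> u s' = U flim s' tau (u tau).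
Proof.
move=> le; have hj := jtP tau.
rewrite (u_eq s' (jt tau) (le_trans hj le)) (u_eq tau (jt tau) hj).
by rewrite ((hU _ Sfl).2 s' tau (P (jt tau))).
Qed.

Lemma w_bound r : `|w r| <= rho.
Proof.
case: (leP (`|w r|) rho) => // hlt; exfalso.
have [te Hte] := Hrho C BC.
have e0 : 0 < `|w r| - rho by rewrite subr_gt0.
have F1 : F [set m | `|w r - q r m| < `|w r| - rho].
  exact: ((cvgrPdist_lt _ _).1 (w_cvg r) _ e0).
have [N hN'] := nat_gt (te - r).
have [m [/= h1 h2]] := filter_ex (filterI F1 (Fge_s N)).
have ht : te <= r - - s m by lra.
have := Hte _ (Sgs m) r (- s m) ht _ (Cxs m).
have := ler_normD (w r - q r m) (q r m); rewrite subrK.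
rewrite /q in h1 *; lra.
Qed.

Lemma u_bound t : `|u t| < rho.
Proof.
have [te Hte] := Hrho _ (@bounded_of R X [set x : X | `|x| <= rho] rho (fun x hx => hx)).
have [j hj] := ex_j (t - `|te|).
have hj' : P j <= t by have := normr_ge0 te; lra.
rewrite (u_eq t j hj'); apply: (Hte _ Sfl) => //; last exact: w_bound.
have := ler_norm te; lra.
Qed.

Lemma u0 : u 0 = w 0.
Proof.
have P0 : P 0 = 0 by rewrite /P mul0r oppr0.
have hP : P 0 <= 0 by rewrite P0.
by rewrite (u_eq 0 0%N hP) P0 (hU _ Sfl).1.
Qed.

Lemma KL_in : Kset (w 0) /\ q 0 @ F --> w 0.
Proof.
split; last exact: w_cvg.
exists flim; first exact: Sfl.
exists u; last by rewrite u0.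
split; last by move=> s' tau /u_traj.
by apply: (@bounded_of R X _ rho) => _ [t _ <-]; apply: ltW; exact: u_bound.
Qed.

End Inner.
Lemma KL C : bounded_set C -> forall (gs : nat -> L) (s : nat -> R) (xs : nat -> X),
  (forall m, Sig (gs m)) -> (forall m, m%:R <= s m) -> (forall m, C (xs m)) ->
  exists z, Kset z /\ forall eps, 0 < eps -> forall N, exists2 m, (N <= m)%N &
    `|z - U (gs m) 0 (- s m) (xs m)| < eps.
Proof.
move=> BC gs s xs Sgs hs Cxs.
have [rho Hrho] := L3.
have [G [GU sub]] := ultraFilterLemma (F := \oo) _.
have GP : ProperFilter G by exact: ultra_proper.
have Gult : forall A, G A \/ G (~` A) by move=> A; exact: in_ultra_setVsetC.
have Ginf : forall N, G [set m | (N <= m)%N] by move=> N; apply: sub; exists N.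
have [n0 [h [hN [h0 [hinc hcl]]]]] := hclosed.
have [Kz cv] := @KL_in rho Hrho G GP Gult Ginf n0 h hN h0 hinc hcl C BC gs Sgs s hs xs Cxs.
eexists; split; first exact: Kz.
move=> eps e0 N.
have F1 : G [set m | `|w G Gult Ginf C BC gs Sgs s hs xs Cxs 0 - q gs s xs 0 m| < eps].
  exact: ((cvgrPdist_lt _ _).1 cv _ e0).
have [m [/= h1 h2]] := filter_ex (filterI F1 (Ginf N)).
by exists m.
Qed.

Lemma traj_bnd : exists rho, forall f, Sig f -> forall u,
  complete_bounded_trajectory (U f) u -> forall r, `|u r| <= rho.
Proof.
have [rho Hrho] := L3; exists rho => f Sf u [Bu Hu] r.
have [te Hte] := Hrho _ Bu.
have le1 : r - `|te| <= r by have := normr_ge0 te; lra.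
have le2 : te <= r - (r - `|te|) by have := ler_norm te; lra.
rewrite (Hu r (r - `|te|) le1); apply: ltW.
exact: (Hte f Sf r (r - `|te|) le2 _ (ex_intro2 _ _ (r - `|te|) I erefl)).
Qed.

Lemma K_closed : closed Kset.
Proof.
move=> z clz; have [rho Hb] := traj_bnd.
have Hm : forall m : nat, exists fu : L * (R -> X), Sig fu.1 /\
    complete_bounded_trajectory (U fu.1) fu.2 /\ `|z - fu.2 0| < (m.+1%:R)^-1.
  move=> m; have [x [[f Sf [u cu ->]] bx]] := clz _ (nbhsx_ballx z _ (inv_pos R m)).
  by exists (f, u); split => //; split => //; move: bx; rewrite -ball_normE.
pose fs m := projT1 (cid (Hm m)).
have hfs m : Sig (fs m).1 /\ complete_bounded_trajectory (U (fs m).1) (fs m).2 /\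
    `|z - (fs m).2 0| < (m.+1%:R)^-1 := projT2 (cid (Hm m)).
have BC := @bounded_of R X [set x : X | `|x| <= rho] rho (fun x hx => hx).
have [z' [Kz' Hz']] := KL _ BC (fun m => (fs m).1) (fun m => m%:R)
  (fun m => (fs m).2 (- m%:R)) (fun m => (hfs m).1) (fun m => lexx _)
  (fun m => Hb _ (hfs m).1 _ (hfs m).2.1 _).
suff -> : z = z' by [].
case: (eqVneq z z') => // hne; exfalso.
have e0 : 0 < `|z - z'| by rewrite normr_gt0 subr_eq0.
set eps := `|z - z'| in e0.
have e2 : 0 < eps / 2 by rewrite divr_gt0.
have [N hN] := inv_small e2.
have [m hm hzm] := Hz' _ e2 N.
have [_ [[_ Hu] hz]] := hfs m.
have e3 : (- m%:R) <= (0 : R) by rewrite oppr_le0.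
rewrite -(Hu 0 (- m%:R) e3) in hzm.
have := inv_mono R hm; have := ler_distD ((fs m).2 0) z z'.
rewrite distrC in hzm; move: hN hzm hz; rewrite /eps.
move: (m.+1%:R^-1) (N.+1%:R^-1) (`|z - z'|) => a b c; lra.
Qed.

Lemma K_compact : compact Kset.
Proof.
rewrite compact_ultra => G GU GK.
have GP : ProperFilter G by exact: ultra_proper.
have [z Gz] : exists z : X, G --> z.
  apply: ultra_cauchy; first by move=> A; exact: in_ultra_setVsetC.
  move=> eps e0; have [s' Hs'] := L1 eps e0; exists s'.
  apply: filterS GK => _ [f Sf [u [Bu Hu] ->]].
  have [te Hte] := Hs' _ Bu.
  have le1 : - `|te| <= 0 by rewrite oppr_le0 normr_ge0.
  have le2 : te <= 0 - - `|te| by rewrite sub0r opprK ler_norm.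
  rewrite (Hu 0 (- `|te|) le1).
  exact: (Hte f Sf 0 (- `|te|) le2 _ (ex_intro2 _ _ (- `|te|) I erefl)).
exists z; split => //; apply: K_closed => B nB.
exact: (filter_ex (filterI GK (Gz _ nB))).
Qed.

Lemma K_attr : unif_attracting Sig U Kset.
Proof.
move=> C BC eps e0; apply: contrapT => nex.
have Hm : forall m : nat, exists p : (R * R) * (L * X),
   m%:R <= p.1.1 - p.1.2 /\ Sig p.2.1 /\ C p.2.2 /\
   forall xi, Kset xi -> eps < `|U p.2.1 p.1.1 p.1.2 p.2.2 - xi|.
  move=> m; apply: contrapT => nHm; apply: nex.
  exists m%:R => t tau hle; apply: ge_ereal_sup => _ [f Sf <-].
  apply: ge_ereal_sup => _ [y [x Cx <-] <-].
  case: (leP (ereal_inf [set (`|U f t tau x - xi|)%:E | xi in Kset]) eps%:E) => //.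
  move=> hlt; exfalso; apply: nHm; exists ((t, tau), (f, x)) => /=.
  split => //; split => //; split => // xi Kxi.
  have : (ereal_inf [set (`|U f t tau x - xi|)%:E | xi in Kset] <=
     (`|U f t tau x - xi|)%:E)%E by apply: ereal_inf_lbound; exists xi.
  by move=> /(lt_le_trans hlt); rewrite lte_fin.
pose pm m := projT1 (cid (Hm m)).
have hpm m := projT2 (cid (Hm m)).
have Sgs m : Sig (T (pm m).1.1 (pm m).2.1).
  by apply: hT_maps; exists (pm m).2.1 => //; case: (hpm m) => _ [].
have [z [Kz Hz]] := KL _ BC (fun m => T (pm m).1.1 (pm m).2.1)
  (fun m => (pm m).1.1 - (pm m).1.2) (fun m => (pm m).2.2) Sgs
  (fun m => (hpm m).1) (fun m => (hpm m).2.2.1).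
have [m _ hzm] := Hz eps e0 0%N.
have [hm [Sf [_ Hfar]]] := hpm m.
move: hzm; set t := (pm m).1.1; set tau := (pm m).1.2; set f := (pm m).2.1.
set x := (pm m).2.2.
have hle : - (t - tau) <= 0 by rewrite oppr_le0; apply: le_trans hm; rewrite ler0n.
rewrite -(hU_transl _ Sf t 0 (- (t - tau)) hle).
have -> : t + - (t - tau) = tau by ring.
rewrite addr0 distrC => hzm.
have := Hfar z Kz; rewrite -/t -/tau -/f -/x; lra.
Qed.

Lemma K_min K' : compact K' -> unif_attracting Sig U K' -> Kset `<=` K'.
Proof.
move=> cK aK _ [f Sf [u [Bu Hu] ->]].
have cl : closed K' := compact_closed (@norm_hausdorff _ X) cK.
apply: cl => B nB.
have [d hd] := nbhs_ex nB.
have e2 : 0 < d%:num / 2 by rewrite divr_gt0.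
have [T0 HT] := aK _ Bu _ e2.
have hle : T0 <= 0 - - `|T0| by rewrite sub0r opprK ler_norm.
have tle : - `|T0| <= 0 by rewrite oppr_le0 normr_ge0.
have := HT 0 (- `|T0|) hle.
set B0 := U f 0 (- `|T0|) @` range u.
have hB0 : B0 (u 0).
  by exists (u (- `|T0|)); [exists (- `|T0|)|rewrite -Hu].
have h1 := ereal_sup_ubound (ex_intro2 _ _ f Sf erefl :
   [set hdist (U g0 0 (- `|T0|) @` range u) K' | g0 in Sig] (hdist B0 K')).
have h2 := ereal_sup_ubound (ex_intro2 _ _ (u 0) hB0 erefl :
   [set ereal_inf [set (`|x - xi|)%:E | xi in K'] | x in B0]
     (ereal_inf [set (`|u 0 - xi|)%:E | xi in K'])).
move=> h3.
have h4 : (ereal_inf [set (`|u 0 - xi|)%:E | xi in K'] < (d%:num)%:E)%E.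
  apply: le_lt_trans (le_trans h2 (le_trans h1 h3)) _.
  by rewrite lte_fin; have := gt0 d; lra.
have [_ [xi Kxi <-]] := ereal_inf_lt h4.
rewrite lte_fin => hxi; exists xi; split => //; apply: hd.
by rewrite -ball_normE.
Qed.

End Main.

Theorem theorem7p3
  (R : realType) (X : completeNormedModType R)
  (* the metric space of functions on R (with values in X): an abstract metric
     space L together with an injective realisation of its elements as functions *)
  (L : metricType R) (ev : L -> R -> X) (ev_inj : injective ev)
  (* translations T(h) on L : [T(h) f](t) = f(h + t) *)
  (T : R -> L -> L) (hT : forall h f t, ev (T h f) t = ev f (h + t))
  (g : L)
  (* g is translation compact; its hull is the closure of its translates *)
  (g_tc : compact (closure (range (fun h => T h g))))
  (* T(h) belongs to C(H(g), H(g)) *)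
  (hT_maps : forall h, T h @` closure (range (fun h => T h g))
                         `<=` closure (range (fun h => T h g)))
  (hT_cont : forall h, {within closure (range (fun h => T h g)), continuous (T h)})
  (* the family of processes U_f, f in H(g) *)
  (U : L -> R -> R -> X -> X)
  (hU : forall f, closure (range (fun h => T h g)) f -> is_process (U f))
  (hU_transl : forall f, closure (range (fun h => T h g)) f ->
     forall h t tau, tau <= t -> U f (h + t) (h + tau) = U (T h f) t tau)
  (hdiss : unif_totally_dissipative (closure (range (fun h => T h g))) U)
  (hclosed : asymptotically_closed (closure (range (fun h => T h g))) U) :
  exists A : set X,
    is_uniform_global_attractor (closure (range (fun h => T h g))) U A /\
    A = [set x | exists2 f, closure (range (fun h => T h g)) f &
                 exists2 u, complete_bounded_trajectory (U f) u & x = u 0].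

Proof.
exists [set x | exists2 f, closure (range (fun h => T h g)) f &
                 exists2 u, complete_bounded_trajectory (U f) u & x = u 0].
split => //; split.
  exact: (@K_compact _ _ _ _ _ _ g_tc hT_maps hT_cont hU hU_transl hdiss hclosed).
split.
  exact: (@K_attr _ _ _ _ _ _ g_tc hT_maps hT_cont hU hU_transl hdiss hclosed).
move=> K cK aK; exact: (@K_min _ _ _ _ _ _ K cK aK).
Qed.
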